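(* Let $n,m\ge1$, $c_1,\dots,c_n>0$, $T>0$, $\epsilon>0$, $r_1,\dots,r_m>0$ constant, and $\kappa_{ij}\ge0$. Define: - $\mu_j(q_j)=0$ if $q_j\le c_j$ and $\mu_j(q_j)=T(1-c_j/q_j)$ if $q_j>c_j$ (i.e. $\mu_j(q_j)=T[1-c_j/q_j]^+$); - for $\mu\in\mathbb{R}^n$, $\delta_{ij}(\mu)=\dfrac{e^{-(\kappa_{ij}+\mu_j)/\epsilon}}{\sum_{k=1}^n e^{-(\kappa_{ik}+\mu_k)/\epsilon}}$; - $\beta_j(q_j)=0$ if $q_j\le c_j$, $\beta_j(q_j)=q_j-c_j-c_j\log(q_j/c_j)$ if $q_j>c_j$. Consider the dynamical system in $q\in\mathbb{R}^n$: $$\dot q_j=\sum_{i=1}^m x_{ij}-\frac{q_j}{T},\qquad \mu_j=\mu_j(q_j),\qquad x_{ij}=r_i\,\delta_{ij}(\mu),$$ and call $(X^*,q^*,\mu^* )$ an equilibrium point if $\mu^*_j=\mu_j(q^*_j)$, $x^*_{ij}=r_i\delta_{ij}(\mu^* )$ and $\sum_i x^*_{ij}=q^*_j/T$ for all $i,j$. Define the Lagrangian $$L(X,q,\mu)=\sum_{i,j}\kappa_{ij}x_{ij}+\sum_j\beta_j(q_j)+\epsilon\sum_{i,j}x_{ij}\log\Big(\frac{x_{ij}}{r_i}\Big)+\sum_j\mu_j\Big[\sum_i x_{ij}-\frac{q_j}{T}\Big]$$ for $X$ in the set $S=\{X: x_{ij}\ge0,\ \sum_j x_{ij}=r_i\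 \forall i\}$, $q\in\mathbb{R}^n$, $\mu\in\mathbb{R}^n$, and call $(X^*,q^*,\mu^* )$ a saddle point of $L$ if $(X^*,q^* )$ minimizes $L(\cdot,\cdot,\mu^* )$ over $S\times\mathbb{R}^n$ and $\mu^*$ maximizes $L(X^*,q^*,\cdot)$ over $\mathbb{R}^n$. Then the following are equivalent: (i) $(X^*,q^*,\mu^* )$ is a saddle point of $L$; (ii) $(X^*,q^*,\mu^* )$ is an equilibrium point of the dynamics. In particular, the dynamics have a unique equilibrium point.
   Context: Convention $0\log0=0$. The dynamics model queues $q_j$ at $n$ EV charging stations with capacities $c_j$, fed by requests from $m$ locations at rates $r_i$ with travel times $\kappa_{ij}$, mean sojourn time $T$, waiting delays $\mu_j$, and soft-min (logit) station selection with parameter $\epsilon$. *)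

(* Defs.v *)
From mathcomp Require Import all_boot all_order all_algebra.
From mathcomp Require Import all_classical all_reals all_analysis.
Set Implicit Arguments. Unset Strict Implicit. Unset Printing Implicit Defensive.
Import Order.TTheory GRing.Theory Num.Theory.
Local Open Scope ring_scope.

Section Model.
Variables (R : realType) (n m : nat).
Variables (c : 'I_n -> R) (T eps : R) (r : 'I_m -> R) (kappa : 'I_m -> 'I_n -> R).

Definition mu_fun (j : 'I_n) (qj : R) : R :=
  if qj <= c j then 0 else T * (1 - c j / qj).

Definition delta (mu : 'I_n -> R) (i : 'I_m) (j : 'I_n) : R :=
  expR (- (kappa i j + mu j) / eps) /
  \sum_(k < n) expR (- (kappa i k + mu k) / eps).

Definition beta (j : 'I_n) (qj : R) : R :=
  if qj <= c j then 0 else qj - c j - c j * ln (qj / c j).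

(* x log(x / r) with the convention 0 log 0 = 0 *)
Definition xlogx (x ri : R) : R := if x == 0 then 0 else x * ln (x / ri).

Definition Lagr (X : 'I_m -> 'I_n -> R) (q mu : 'I_n -> R) : R :=
  \sum_(i < m) \sum_(j < n) kappa i j * X i j
  + \sum_(j < n) beta j (q j)
  + eps * \sum_(i < m) \sum_(j < n) xlogx (X i j) (r i)
  + \sum_(j < n) mu j * (\sum_(i < m) X i j - q j / T).

Definition inS (X : 'I_m -> 'I_n -> R) : Prop :=
  (forall i j, 0 <= X i j) /\ (forall i, \sum_(j < n) X i j = r i).

Definition saddle_point (X : 'I_m -> 'I_n -> R) (q mu : 'I_n -> R) : Prop :=
  inS X /\
  (forall X' q', inS X' -> Lagr X q mu <= Lagr X' q' mu) /\
  (forall mu', Lagr X q mu' <= Lagr X q mu).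

Definition equilibrium (X : 'I_m -> 'I_n -> R) (q mu : 'I_n -> R) : Prop :=
  (forall j, mu j = mu_fun j (q j)) /\
  (forall i j, X i j = r i * delta mu i j) /\
  (forall j, \sum_(i < m) X i j = q j / T).

End Model.

(* Main.v *)
Require Import Defs.
From mathcomp Require Import all_boot all_order all_algebra.
From mathcomp Require Import all_classical all_reals all_analysis.
From mathcomp Require Import ring lra.
Import Order.TTheory GRing.Theory Num.Theory.

Module Helpers.
Import numFieldNormedType.Exports.
Import numFieldNormedType.Exports.
Local Open Scope ring_scope.
Set Implicit Arguments. Unset Strict Implicit.

Section LnFacts.
Variable R : realType.
Implicit Types x y : R.

Lemma ln_le_sub1 x : 0 < x -> ln x <= x - 1.
Proof.
move=> x0; have := expR_ge1Dx (ln x); rewrite lnK ?posrE //; lra.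
Qed.

Lemma ln_lt_sub1 x : 0 < x -> x != 1 -> ln x < x - 1.
Proof.
move=> x0 x1; have h : ln x != 0 by rewrite ln_eq0.
have := expR_gt1Dx h; rewrite lnK ?posrE //; lra.
Qed.

Definition Bf x y := xlogx x y - x + y.

Lemma xlogx_pos x y : 0 < x -> xlogx x y = x * ln (x / y).
Proof. by move=> x0; rewrite /xlogx gt_eqF. Qed.

Lemma Bf_ge0 x y : 0 <= x -> 0 < y -> 0 <= Bf x y.
Proof.
rewrite le_eqVlt => /orP[/eqP<-|x0] y0; first by rewrite /Bf /xlogx eqxx; lra.
rewrite /Bf xlogx_pos //.
have hyx : 0 < y / x by rewrite divr_gt0.
have := ln_le_sub1 hyx.
rewrite -[x / y]invf_div lnV ?posrE //.
move=> h; have : x * (y / x - 1) = y - x by field; rewrite gt_eqF.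
move=> e; have := ler_wpM2l (ltW x0) h; rewrite e; lra.
Qed.

Lemma Bf_eq0 x y : 0 <= x -> 0 < y -> Bf x y = 0 -> x = y.
Proof.
rewrite le_eqVlt => /orP[/eqP<-|x0] y0; first by rewrite /Bf /xlogx eqxx; lra.
rewrite /Bf xlogx_pos // => hB.
have hyx : 0 < y / x by rewrite divr_gt0.
case: (eqVneq (y / x) 1) => [e|ne].
  have : y = (y / x) * x by field; rewrite gt_eqF.
  by rewrite e mul1r.
have := ln_lt_sub1 hyx ne.
rewrite -[x / y]invf_div lnV ?posrE // in hB.
move=> h; have : x * (y / x - 1) = y - x by field; rewrite gt_eqF.
move=> e; move: h; rewrite -(ltr_pM2l x0) e; lra.
Qed.

Lemma Bf_xx y : 0 < y -> Bf y y = 0.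
Proof. by move=> y0; rewrite /Bf xlogx_pos // divff ?gt_eqF // ln1 mulr0; lra. Qed.

End LnFacts.


Arguments ln_le_sub1 {R x}.
Section Beta.
Variable R : realType.
Variable c : R.
Hypothesis c0 : 0 < c.

Definition bt (t : R) := if t <= c then 0 else t - c - c * ln (t / c).
Definition gg (t : R) := if t <= c then 0 else 1 - c / t.

Lemma bt_ge0 t : 0 <= bt t.
Proof.
have c0' := c0.
rewrite /bt; case: ifPn => // ; rewrite -ltNge => ct.
have h := ln_le_sub1 (divr_gt0 (lt_trans c0 ct) c0).
have := ler_wpM2l (ltW c0) h.
have -> : c * (t / c - 1) = t - c by field; rewrite gt_eqF.
lra.
Qed.

Lemma gg_ge0 t : 0 <= gg t.
Proof.
have c0' := c0.
rewrite /gg; case: ifPn => // ; rewrite -ltNge => ct.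
rewrite subr_ge0 ler_pdivrMr ?mul1r ?ltW //; exact: lt_trans c0 ct.
Qed.

Lemma gg_lt1 t : gg t < 1.
Proof.
have c0' := c0.
rewrite /gg; case: ifPn => [_|]; first lra.
rewrite -ltNge => ct.
have : 0 < c / t by rewrite divr_gt0 // (lt_trans c0 ct).
lra.
Qed.

Lemma bt_convex s t : bt t + gg t * (s - t) <= bt s.
Proof.
have c0' := c0.
rewrite /gg; case: ifPn => [tc|]; first by rewrite /bt tc mul0r addr0 bt_ge0.
rewrite -ltNge => ct.
have t0 : 0 < t by exact: lt_trans c0 ct.
have e1 : (1 - c / t) * (s - t) = (1 - c / t) * s - t + c by field; rewrite gt_eqF.
rewrite /bt (lt_geF ct) e1.
case: ifPn => [sc|]; last rewrite -ltNge => cs.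
  have h : - ln (t / c) <= c / t - 1.
    by have := ln_le_sub1 (divr_gt0 c0 t0); rewrite -{1}[c / t]invf_div lnV ?posrE ?divr_gt0.
  have hu : 0 <= 1 - c / t.
    rewrite subr_ge0 ler_pdivrMr ?mul1r ?ltW //.
  have h1 := ler_wpM2l hu sc.
  have h2 := ler_wpM2l (ltW c0) h.
  have e2 : c * (c / t - 1) = c * c / t - c by field; rewrite gt_eqF.
  rewrite e2 in h2.
  have e3 : (1 - c / t) * c = c - c * c / t by field; rewrite gt_eqF.
  rewrite e3 in h1.
  lra.
have s0 : 0 < s by exact: lt_trans c0 cs.
have h := ln_le_sub1 (divr_gt0 s0 t0).
have e4 : s / t = (s / c) / (t / c) by field; rewrite !gt_eqF.
rewrite e4 ln_div ?posrE ?divr_gt0 // -e4 in h.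
have h2 := ler_wpM2l (ltW c0) h.
have e5 : c * (s / t - 1) = c / t * s - c by field; rewrite gt_eqF.
rewrite e5 in h2.
have e6 : (1 - c / t) * s = s - c / t * s by ring.
rewrite e6.
lra.
Qed.

Lemma bt_min_gg q a : (forall t, bt q - a * q <= bt t - a * t) -> a = gg q.
Proof.
have c0' := c0.
move=> hmin.
have up t : q < t -> a <= gg t.
  move=> qt; have h1 := hmin t; have h2 := bt_convex q t.
  have : a * (t - q) <= gg t * (t - q) by lra.
  by rewrite ler_pM2r ?subr_gt0.
have lo t : t < q -> gg t <= a.
  move=> tq; have h1 := hmin t; have h2 := bt_convex q t.
  have : gg t * (q - t) <= a * (q - t) by lra.
  by rewrite ler_pM2r ?subr_gt0.
apply/eqP; case: (ltgtP a (gg q)) => // [agq|gqa]; exfalso.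
-
  case: (ltP a 0) => [an|ap].
    have := lo (q - 1) ltac:(lra); have := gg_ge0 (q - 1); lra.
  have : 0 < gg q by exact: le_lt_trans ap agq.
  rewrite /gg; case: ifPn => [_|]; first lra.
  rewrite -ltNge => cq _.
  have q0 : 0 < q by exact: lt_trans c0 cq.
  rewrite /gg (lt_geF cq) in agq.
  have a1 : 0 < 1 - a.
    have : 0 < c / q by rewrite divr_gt0.
    lra.
  have [k kdef] : exists k : R, k = c / (1 - a) by eexists.
  have kq : k < q.
    rewrite kdef ltr_pdivrMr //.
    have : c / q < 1 - a by lra.
    by rewrite ltr_pdivrMr // mulrC.
  have ck : c <= k.
    rewrite kdef ler_pdivlMr //; have := mulr_ge0 (ltW c0) ap; lra.
  have := lo ((q + k) / 2) ltac:(lra).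
  rewrite /gg (lt_geF (_ : c < (q + k) / 2)); last lra.
  have tp : 0 < (q + k) / 2 by lra.
  have : c / ((q + k) / 2) < 1 - a.
    rewrite ltr_pdivrMr //.
    have : c = (1 - a) * k by rewrite kdef mulrC divfK ?gt_eqF.
    have : (1 - a) * k < (1 - a) * ((q + k) / 2) by rewrite ltr_pM2l //; lra.
    lra.
  lra.
-
  have a0 : 0 < a by exact: le_lt_trans (gg_ge0 q) gqa.
  case: (leP 1 a) => [a1|a1].
    have := up (q + 1) ltac:(lra); have := gg_lt1 (q + 1); lra.
  have a1' : 0 < 1 - a by lra.
  have [k kdef] : exists k : R, k = c / (1 - a) by eexists.
  have qk : q < k.
    case: (leP q c) => [qc|cq].
      apply: (le_lt_trans qc); rewrite kdef ltr_pdivlMr // gtr_pMr //; lra.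
    have q0 : 0 < q by exact: lt_trans c0 cq.
    rewrite /gg (lt_geF cq) in gqa.
    rewrite kdef ltr_pdivlMr //.
    have : 1 - a < c / q by lra.
    by rewrite ltr_pdivlMr // mulrC.
  have := up ((q + k) / 2) ltac:(lra).
  rewrite /gg; case: ifPn => [_|]; first lra.
  rewrite -ltNge => ct.
  have tp : 0 < (q + k) / 2 by exact: lt_trans c0 ct.
  have : 1 - a < c / ((q + k) / 2).
    rewrite ltr_pdivlMr //.
    have : (1 - a) * k = c by rewrite kdef mulrC divfK ?gt_eqF.
    have : (1 - a) * ((q + k) / 2) < (1 - a) * k by rewrite ltr_pM2l //; lra.
    lra.
  lra.
Qed.

End Beta.

Local Open Scope classical_set_scope.
Section Cont.
Variable R : realType.
Definition ctn (f : R -> R) (x : R) := {for x, continuous f}.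

Lemma ctn_cst (a : R) x : ctn (fun=> a) x.
Proof. exact: cvg_cst. Qed.
Lemma ctn_id x : ctn id x.
Proof. exact: cvg_id. Qed.
Lemma ctn_add f g x : ctn f x -> ctn g x -> ctn (fun t => f t + g t) x.
Proof. move=> hf hg; exact: cvgD. Qed.
Lemma ctn_mul f g x : ctn f x -> ctn g x -> ctn (fun t => f t * g t) x.
Proof. move=> hf hg; exact: cvgM. Qed.
Lemma ctn_opp f x : ctn f x -> ctn (fun t => - f t) x.
Proof. move=> hf; exact: cvgN. Qed.
Lemma ctn_inv f x : f x != 0 -> ctn f x -> ctn (fun t => (f t)^-1) x.
Proof. move=> h hf; exact: cvgV. Qed.
Lemma ctn_exp f x : ctn f x -> ctn (fun t => expR (f t)) x.
Proof. move=> hf; apply: (continuous_comp hf); exact: continuous_expR. Qed.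
Lemma ctn_sum (I : Type) (s : seq I) (F : I -> R -> R) x :
  (forall k, ctn (F k) x) -> ctn (fun t => \sum_(k <- s) F k t) x.
Proof.
move=> h; elim: s => [|a s IH].
  have -> : (fun t => \sum_(k <- [::]) F k t) = fun=> 0 by apply: funext => t; rewrite big_nil.
  exact: ctn_cst.
have -> : (fun t => \sum_(k <- a :: s) F k t) = fun t => F a t + \sum_(k <- s) F k t.
  by apply: funext => t; rewrite big_cons.
exact: ctn_add.
Qed.
Lemma ctn_ivt (f : R -> R) a b v : a <= b -> (forall x, ctn f x) ->
  Num.min (f a) (f b) <= v <= Num.max (f a) (f b) -> exists2 c, a <= c <= b & f c = v.
Proof.
move=> ab hf hv. have hc : {within `[a, b], continuous f}.
  apply: continuous_subspaceT. move=> x. exact: hf x.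
have [x h1 h2] := IVT ab hc hv. by exists x; rewrite // in_itv /= in h1.
Qed.
End Cont.

End Helpers.
Import Helpers.

Module Helpers2.
Import numFieldNormedType.Exports.
Import numFieldNormedType.Exports.
Local Open Scope ring_scope.

Section Model2.
Variables (R : realType) (n m : nat).
Variables (c : 'I_n -> R) (T eps : R) (r : 'I_m -> R) (kappa : 'I_m -> 'I_n -> R).
Hypothesis hn : (0 < n)%N.
Hypothesis hc : forall j, 0 < c j.
Hypothesis hT : 0 < T.
Hypothesis heps : 0 < eps.
Hypothesis hr : forall i, 0 < r i.

Definition phi (mu : 'I_n -> R) i j x := kappa i j * x + eps * xlogx x (r i) + mu j * x.
Definition Qf (mu q : 'I_n -> R) := \sum_(j < n) (beta c j (q j) - mu j * (q j / T)).

Lemma Lagr_split X q mu :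
  Lagr c T eps r kappa X q mu = \sum_(i < m) \sum_(j < n) phi mu i j (X i j) + Qf mu q.
Proof.
rewrite /Lagr /Qf /phi.
have S1 : \sum_(i < m) \sum_(j < n) (kappa i j * X i j + eps * xlogx (X i j) (r i) + mu j * X i j)
  = \sum_(i < m) \sum_(j < n) kappa i j * X i j + eps * \sum_(i < m) \sum_(j < n) xlogx (X i j) (r i)
    + \sum_(i < m) \sum_(j < n) mu j * X i j.
  rewrite mulr_sumr -!big_split; apply: eq_bigr => i _; rewrite mulr_sumr -!big_split.
  by apply: eq_bigr.
have S2 : \sum_(i < m) \sum_(j < n) mu j * X i j = \sum_(j < n) mu j * \sum_(i < m) X i j.
  rewrite exchange_big; apply: eq_bigr => j _; by rewrite mulr_sumr.
have S3 : \sum_(j < n) mu j * (\sum_(i < m) X i j - q j / T)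
  = \sum_(j < n) mu j * \sum_(i < m) X i j - \sum_(j < n) mu j * (q j / T).
  rewrite -sumrB; apply: eq_bigr => j _; by rewrite mulrBr.
have S4 : \sum_(j < n) (beta c j (q j) - mu j * (q j / T))
  = \sum_(j < n) beta c j (q j) - \sum_(j < n) mu j * (q j / T) by rewrite sumrB.
rewrite S1 S2 S3 S4; lra.
Qed.


Definition ee (mu : 'I_n -> R) i k := expR (- (kappa i k + mu k) / eps).
Definition Z (mu : 'I_n -> R) i := \sum_(k < n) ee mu i k.
Definition y (mu : 'I_n -> R) i j := r i * delta eps kappa mu i j.

Lemma ee_gt0 mu i k : 0 < ee mu i k.
Proof. exact: expR_gt0. Qed.

Lemma Z_gt0 mu i : 0 < Z mu i.
Proof.
rewrite /Z (bigD1 (Ordinal hn)) //=.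
apply: (lt_le_trans (ee_gt0 mu i (Ordinal hn))).
rewrite lerDl; apply: sumr_ge0 => k _; exact: ltW (ee_gt0 _ _ _).
Qed.

Lemma deltaE mu i j : delta eps kappa mu i j = ee mu i j / Z mu i.
Proof. by []. Qed.

Lemma delta_gt0 mu i j : 0 < delta eps kappa mu i j.
Proof. by rewrite deltaE divr_gt0 ?ee_gt0 ?Z_gt0. Qed.

Lemma y_gt0 mu i j : 0 < y mu i j.
Proof. by rewrite /y mulr_gt0 ?delta_gt0. Qed.

Lemma sum_delta mu i : \sum_(j < n) delta eps kappa mu i j = 1.
Proof.
under eq_bigr do rewrite deltaE.
by rewrite -mulr_suml divff // gt_eqF // Z_gt0.
Qed.

Lemma sum_y mu i : \sum_(j < n) y mu i j = r i.
Proof. by rewrite /y -mulr_sumr sum_delta mulr1. Qed.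

Lemma ln_delta mu i j :
  ln (delta eps kappa mu i j) = - (kappa i j + mu j) / eps - ln (Z mu i).
Proof.
rewrite deltaE ln_div ?posrE ?ee_gt0 ?Z_gt0 //.
by rewrite /ee expRK.
Qed.

Lemma phi_id mu i j x : 0 <= x ->
  phi mu i j x = eps * Bf x (y mu i j) + eps * x * (1 - ln (Z mu i)) - eps * y mu i j.
Proof.
have he := heps.
rewrite le_eqVlt => /orP[/eqP<-|x0].
  rewrite /phi /Bf /xlogx eqxx; ring.
have hr' := hr i.
rewrite /phi /Bf !xlogx_pos //.
have ey : y mu i j / r i = delta eps kappa mu i j.
  by rewrite /y [r i * _]mulrC mulfK // gt_eqF.
have e : x / r i = (x / y mu i j) * (y mu i j / r i).
  have := y_gt0 mu i j => hy; field; rewrite !gt_eqF //.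
rewrite e (@lnM _ (x / y mu i j) (y mu i j / r i)) ?posrE ?divr_gt0 ?y_gt0 // ey ln_delta.
by field; rewrite gt_eqF.
Qed.

Definition Cst (mu : 'I_n -> R) := \sum_(i < m) (eps * r i * (1 - ln (Z mu i)) - eps * r i).
Definition BB (X : 'I_m -> 'I_n -> R) mu := \sum_(i < m) \sum_(j < n) Bf (X i j) (y mu i j).

Lemma Lagr_S X q mu : inS r X ->
  Lagr c T eps r kappa X q mu = eps * BB X mu + Cst mu + Qf mu q.
Proof.
move=> [X0 Xr]; rewrite Lagr_split /BB /Cst; congr (_ + _).
rewrite mulr_sumr -big_split /=; apply: eq_bigr => i _.
rewrite (eq_bigr (fun j => eps * Bf (X i j) (y mu i j) + eps * X i j * (1 - ln (Z mu i))
   - eps * y mu i j)); last by move=> j _; rewrite phi_id.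
rewrite sumrB big_split /= -!mulr_sumr -mulr_suml sum_delta -mulr_sumr Xr.
ring.
Qed.

Lemma BB_ge0 X mu : (forall i j, 0 <= X i j) -> 0 <= BB X mu.
Proof.
move=> X0; apply: sumr_ge0 => i _; apply: sumr_ge0 => j _.
exact: Bf_ge0 (X0 i j) (y_gt0 mu i j).
Qed.

Lemma BB_y mu : BB (y mu) mu = 0.
Proof. by apply: big1 => i _; apply: big1 => j _; rewrite Bf_xx // y_gt0. Qed.

Lemma inS_y mu : inS r (y mu).
Proof. by split=> [i j|i]; [exact: ltW (y_gt0 mu i j)|exact: sum_y]. Qed.

Lemma Lagr_y q mu : Lagr c T eps r kappa (y mu) q mu = Cst mu + Qf mu q.
Proof. by rewrite Lagr_S; [rewrite BB_y mulr0 add0r|exact: inS_y]. Qed.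

Lemma Xmin_gibbs X q mu : inS r X ->
  (forall X', inS r X' -> Lagr c T eps r kappa X q mu <= Lagr c T eps r kappa X' q mu) ->
  forall i j, X i j = y mu i j.
Proof.
move=> hX hmin i j.
have he := heps.
have h := hmin _ (inS_y mu); rewrite Lagr_y Lagr_S // in h.
have hB := BB_ge0 X mu (proj1 hX).
have hB0 : BB X mu = 0.
  apply/eqP; rewrite eq_le hB andbT.
  have : eps * BB X mu <= 0 by lra.
  by rewrite pmulr_rle0.
have hrow := psumr_eq0P (fun i _ => sumr_ge0 _ (fun j _ => Bf_ge0 (proj1 hX i j) (y_gt0 mu i j))) hB0.
have hij := psumr_eq0P (fun j _ => Bf_ge0 (proj1 hX i j) (y_gt0 mu i j)) (hrow i isT).
exact: Bf_eq0 (proj1 hX i j) (y_gt0 mu i j) (hij j isT).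
Qed.

Lemma Lagr_mu X q mu mu' :
  Lagr c T eps r kappa X q mu' = Lagr c T eps r kappa X q mu
    + \sum_(j < n) (mu' j - mu j) * (\sum_(i < m) X i j - q j / T).
Proof.
rewrite /Lagr.
have -> : \sum_(j < n) mu' j * (\sum_(i < m) X i j - q j / T) =
  \sum_(j < n) mu j * (\sum_(i < m) X i j - q j / T) +
  \sum_(j < n) (mu' j - mu j) * (\sum_(i < m) X i j - q j / T).
  by rewrite -big_split; apply: eq_bigr => j _ /=; ring.
ring.
Qed.

Definition upd (f : 'I_n -> R) j t := fun k => if k == j then t else f k.

Lemma Qf_upd mu q j t : Qf mu (upd q j t) =
  Qf mu q - (beta c j (q j) - mu j * (q j / T)) + (beta c j t - mu j * (t / T)).
Proof.
rewrite /Qf (bigD1 j) //= [in RHS](bigD1 j) //= /upd eqxx.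
rewrite (eq_bigr (fun k => beta c k (q k) - mu k * (q k / T))); last first.
  by move=> k /negbTE ->.
ring.
Qed.

Lemma betaE j t : beta c j t = bt (c j) t.
Proof. by []. Qed.

Lemma mu_funE j t : mu_fun c T j t = T * gg (c j) t.
Proof. by rewrite /mu_fun /gg; case: ifP => _; rewrite ?mulr0. Qed.

Lemma saddle_eq X q mu : saddle_point c T eps r kappa X q mu -> equilibrium c T eps r kappa X q mu.
Proof.
move=> [hX [hmin hmax]].
have hT' := hT.
split; [|split].
- move=> j.
  have hq t : bt (c j) (q j) - mu j / T * q j <= bt (c j) t - mu j / T * t.
    have := hmin X (upd q j t) hX.
    rewrite !Lagr_split Qf_upd !betaE.
    have e1 : mu j * (q j / T) = mu j / T * q j by rewrite mulrA mulrAC.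
    have e2 : mu j * (t / T) = mu j / T * t by rewrite mulrA mulrAC.
    rewrite e1 e2; lra.
  have := bt_min_gg (hc j) hq.
  by rewrite mu_funE => <-; field; rewrite gt_eqF.
- move=> i j; exact: Xmin_gibbs hX (fun X' hX' => hmin X' q hX') i j.
- move=> j.
  set v := fun k => \sum_(i < m) X i k - q k / T.
  have := hmax (fun k => mu k + (if k == j then v j else 0)).
  rewrite (Lagr_mu X q mu) (bigD1 j) //= eqxx.
  have hz : \sum_(k < n | k != j) (mu k + (if k == j then v j else 0) - mu k) *
      (\sum_(i < m) X i k - q k / T) = 0.
    by apply: big1 => k hk; rewrite (negbTE hk) addr0 subrr mul0r.
  rewrite hz addr0 [mu j + _]addrC addrK -/(v j) => h.
  have h2 : v j * v j <= 0 by lra.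
  have h3 : v j * v j = 0 by apply/eqP; rewrite eq_le h2 /= -expr2 sqr_ge0.
  by move: h3 => /eqP; rewrite mulf_eq0 orbb /v subr_eq0 => /eqP.
Qed.

Lemma eq_saddle X q mu : equilibrium c T eps r kappa X q mu -> saddle_point c T eps r kappa X q mu.
Proof.
move=> [hmu [hXd hsum]].
have eX : X = y mu by apply: funext => i; apply: funext => j; rewrite hXd.
subst X.
have hT' := hT; have he := heps.
split; [exact: inS_y|split].
- move=> X' q' hX'.
  rewrite Lagr_y Lagr_S //.
  have hB := BB_ge0 X' mu (proj1 hX').
  have hQ : Qf mu q <= Qf mu q'.
    apply: ler_sum => j _; rewrite !betaE hmu mu_funE.
    have := bt_convex (hc j) (q' j) (q j).
    have e1 : T * gg (c j) (q j) * (q j / T) = gg (c j) (q j) * q j by field; rewrite gt_eqF.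
    have e2 : T * gg (c j) (q j) * (q' j / T) = gg (c j) (q j) * q' j by field; rewrite gt_eqF.
    rewrite e1 e2 mulrBr; lra.
  have : 0 <= eps * BB X' mu by rewrite mulr_ge0 // ltW.
  lra.
- move=> mu'; rewrite (Lagr_mu _ _ mu) big1 ?addr0 // => j _.
  by rewrite hsum subrr mulr0.
Qed.

Lemma sum_exp_gt0 (F : 'I_n -> R) : 0 < \sum_(k < n) expR (F k).
Proof.
rewrite (bigD1 (Ordinal hn)) //=; apply: (lt_le_trans (expR_gt0 (F (Ordinal hn)))).
rewrite lerDl; apply: sumr_ge0 => k _; exact: ltW (expR_gt0 _).
Qed.

Lemma deltaE2 mu i j : delta eps kappa mu i j =
  (\sum_(k < n) expR ((kappa i j + mu j - (kappa i k + mu k)) / eps))^-1.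
Proof.
have he := heps.
rewrite deltaE -invf_div /Z mulr_suml; congr (_^-1); apply: eq_bigr => k _.
rewrite /ee -expRB; congr expR; by field; rewrite gt_eqF.
Qed.

Lemma delta_mono mu mu' i j : (forall k, mu' j - mu' k <= mu j - mu k) ->
  delta eps kappa mu i j <= delta eps kappa mu' i j.
Proof.
move=> hk; have he := heps.
rewrite !deltaE2 lef_pV2 ?posrE ?sum_exp_gt0 //.
apply: ler_sum => k _; rewrite ler_expR; apply: ler_wpM2r; first by rewrite ltW // invr_gt0.
have := hk k; lra.
Qed.

Definition dem (mu : 'I_n -> R) j := \sum_(i < m) r i * delta eps kappa mu i j.
Definition Dtot := \sum_(i < m) r i.

Lemma dem_mono mu mu' j : (forall k, mu' j - mu' k <= mu j - mu k) -> dem mu j <= dem mu' j.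
Proof.
move=> hk; apply: ler_sum => i _; apply: ler_wpM2l; first exact: ltW (hr i).
exact: delta_mono.
Qed.

Lemma delta_le1 mu i j : delta eps kappa mu i j <= 1.
Proof.
rewrite deltaE ler_pdivrMr ?Z_gt0 // mul1r /Z (bigD1 j) //= lerDl.
by apply: sumr_ge0 => k _; exact: ltW (ee_gt0 _ _ _).
Qed.

Lemma dem_le mu j : dem mu j <= Dtot.
Proof.
apply: ler_sum => i _; rewrite -[X in _ <= X]mulr1; apply: ler_wpM2l; first exact: ltW (hr i).
exact: delta_le1.
Qed.

Lemma dem_ge0 mu j : 0 <= dem mu j.
Proof. by apply: sumr_ge0 => i _; rewrite mulr_ge0 // ltW // ?hr ?delta_gt0. Qed.

Definition BR j mu t := [/\ 0 <= t, t < T, dem (upd mu j t) j <= c j / (T - t) &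
  (0 < t -> dem (upd mu j t) j = c j / (T - t))].

Lemma BR_mono j mu nu a b : (forall k, mu k <= nu k) -> BR j mu a -> BR j nu b -> a <= b.
Proof.
move=> hmn [a0 aT _ ha] [b0 bT hb _].
rewrite leNgt; apply/negP => ba.
have a0' : 0 < a by exact: le_lt_trans b0 ba.
have := ha a0' => hda.
have hd : dem (upd mu j a) j <= dem (upd nu j b) j.
  apply: dem_mono => k; rewrite /upd eqxx; case: eqP => _; first lra.
  have := hmn k; lra.
have hc' := hc j.
have : c j / (T - b) < c j / (T - a).
  rewrite ltr_pM2l // ltf_pV2 ?posrE; lra.
lra.
Qed.

Lemma ctn_upd mu j k x : ctn (fun t => upd mu j t k) x.
Proof. rewrite /upd; case: (k == j); [exact: ctn_id|exact: ctn_cst]. Qed.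

Lemma ctn_expo mu i j k x : ctn (fun t => expR (- (kappa i k + upd mu j t k) / eps)) x.
Proof.
apply: ctn_exp; apply: ctn_mul; last exact: ctn_cst.
apply: ctn_opp; apply: ctn_add; [exact: ctn_cst|exact: ctn_upd].
Qed.

Lemma ctn_dem mu j x : ctn (fun t => dem (upd mu j t) j) x.
Proof.
rewrite /dem.
have -> : (fun t => \sum_(i < m) r i * delta eps kappa (upd mu j t) i j) =
  (fun t => \sum_(i <- index_enum 'I_m) r i * (expR (- (kappa i j + upd mu j t j) / eps) *
     (\sum_(k <- index_enum 'I_n) expR (- (kappa i k + upd mu j t k) / eps))^-1)) by [].
apply: ctn_sum => i; apply: ctn_mul; first exact: ctn_cst.
apply: ctn_mul; first exact: ctn_expo.
apply: ctn_inv; last by apply: ctn_sum => k; exact: ctn_expo.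
by rewrite gt_eqF // sum_exp_gt0.
Qed.

Lemma upd_same (f : 'I_n -> R) j : upd f j (f j) = f.
Proof. by apply: funext => k; rewrite /upd; case: eqP => // ->. Qed.

Lemma BR_exists j mu : exists t, BR j mu t.
Proof.
have hT' := hT; have hc' := hc j.
have hcT : 0 < c j / T by rewrite divr_gt0.
case: (leP (dem (upd mu j 0) j) (c j / T)) => [h0|h0].
  by exists 0; split; rewrite ?subr0 ?ltxx // lexx.
set f := fun t => (T - t) * dem (upd mu j t) j - c j.
have hD := dem_le (upd mu j 0) j.
have D1 : 0 < Dtot + 1 by lra.
set t1 := T - c j / (Dtot + 1).
have hcD : 0 < c j / (Dtot + 1) by rewrite divr_gt0.
have f0 : 0 < f 0.
  rewrite /f subr0 subr_gt0; move: h0; rewrite ltr_pdivrMr // mulrC //.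
have t1p : 0 < t1.
  rewrite /t1 subr_gt0 ltr_pdivrMr //.
  have : c j < T * dem (upd mu j 0) j by move: h0; rewrite ltr_pdivrMr // mulrC.
  have : T * dem (upd mu j 0) j <= T * Dtot by rewrite ler_pM2l.
  lra.
have f1 : f t1 < 0.
  rewrite /f /t1 (_ : T - (T - c j / (Dtot + 1)) = c j / (Dtot + 1)); last by ring.
  have h1 := dem_le (upd mu j (T - c j / (Dtot + 1))) j.
  have : c j / (Dtot + 1) * dem (upd mu j (T - c j / (Dtot + 1))) j < c j / (Dtot + 1) * (Dtot + 1).
    rewrite ltr_pM2l //; lra.
  rewrite divfK ?gt_eqF //; lra.
have hf : forall x, ctn f x.
  move=> x; rewrite /f; apply: ctn_add; last exact: ctn_cst.
  apply: ctn_mul; last exact: ctn_dem.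
  apply: ctn_add; [exact: ctn_cst|apply: ctn_opp; exact: ctn_id].
have hv : Num.min (f 0) (f t1) <= 0 <= Num.max (f 0) (f t1).
  apply/andP; split.
    by rewrite ge_min; apply/orP; right; lra.
  by rewrite le_max; apply/orP; left; lra.
have [t /andP[t0 tt1] ft] := ctn_ivt (ltW t1p) hf hv.
  exists t.
  have tp : 0 < t.
    rewrite lt_neqAle t0 andbT; apply/negP => /eqP t0e; move: f0; rewrite t0e ft; lra.
  have tT : t < T by rewrite /t1 in tt1; lra.
  have e : dem (upd mu j t) j = c j / (T - t).
    have ft' : (T - t) * dem (upd mu j t) j = c j by move: ft; rewrite /f; lra.
    apply/esym; rewrite -ft' [_ * dem _ _]mulrC mulfK // gt_eqF // subr_gt0 //.
  by split => //; rewrite e.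
Qed.

Local Open Scope classical_set_scope.

Lemma exists_fp : exists s : 'I_n -> R, forall j, BR j s (s j).
Proof.
have [F hF] : {F : ('I_n * ('I_n -> R)) -> R & forall p, BR p.1 p.2 (F p)}.
  exact: (choice (fun p : 'I_n * ('I_n -> R) => BR_exists p.1 p.2)).
pose P := [set mu : 'I_n -> R | forall j, mu j <= F (j, mu)].
pose S j := [set x : R | exists2 mu, P mu & x = mu j].
pose s j := sup (S j).
have FT j mu : F (j, mu) < T by case: (hF (j, mu)).
have F0 j mu : 0 <= F (j, mu) by case: (hF (j, mu)).
have Fmono j mu nu : (forall k, mu k <= nu k) -> F (j, mu) <= F (j, nu).
  by move=> h; exact: BR_mono h (hF (j, mu)) (hF (j, nu)).
have Sne j : S j !=set0.
  exists 0; exists (fun=> 0) => // k; exact: F0.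
have Sub j : ubound (S j) T.
  by move=> x [mu Pmu ->]; apply: ltW; apply: le_lt_trans (Pmu j) (FT j mu).
have Ssup j : has_sup (S j) by split; [exact: Sne|exists T; exact: Sub].
have le_s mu : P mu -> forall k, mu k <= s k.
  by move=> Pmu k; apply: sup_upper_bound (Ssup k) _ _; exists mu.
have sF j : s j <= F (j, s).
  apply: ge_sup; first exact: Sne.
  move=> x [mu Pmu ->]; apply: le_trans (Pmu j) _; apply: Fmono; exact: le_s.
have PFs : P (fun k => F (k, s)).
  by move=> j /=; apply: Fmono => k; exact: sF.
have Fs j : F (j, s) = s j.
  by apply/eqP; rewrite eq_le sF andbT; exact: le_s PFs j.
by exists s => j; rewrite -(Fs j); exact: hF (j, s).
Qed.

Lemma exists_eq : exists X q mu, equilibrium c T eps r kappa X q mu.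
Proof.
have [s hs] := exists_fp.
have hT' := hT.
exists (y s), (fun j => T * dem s j), s.
split; [|split].
- move=> j; have [s0 sT hle heq] := hs j; rewrite upd_same in hle heq.
  have hc' := hc j.
  rewrite mu_funE /gg.
  case: (ltP 0 (s j)) => [sp|sn]; last first.
    have sz : s j = 0 by apply/eqP; rewrite eq_le sn s0.
    move: hle; rewrite sz subr0 => hle.
    have : T * dem s j <= c j by rewrite -ler_pdivlMl // mulrC.
    by move=> ->; rewrite mulr0.
  have hd := heq sp.
  have Tsp : 0 < T - s j by lra.
  have gt : c j < T * dem s j.
    rewrite hd mulrA ltr_pdivlMr // mulrC ltr_pM2r //; lra.
  rewrite (lt_geF gt) hd; field.
  by rewrite !gt_eqF // ?mulr_gt0 ?divr_gt0.
- by [].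
- move=> j; rewrite /y -/(dem s j). by field; rewrite gt_eqF.
Qed.

Lemma unique_eq X1 q1 mu1 X2 q2 mu2 :
  equilibrium c T eps r kappa X1 q1 mu1 -> equilibrium c T eps r kappa X2 q2 mu2 ->
  [/\ X1 = X2, q1 = q2 & mu1 = mu2].
Proof.
move=> e1 e2.
have [hX1 [min1 _]] := eq_saddle _ _ _ e1.
have [hX2 [min2 _]] := eq_saddle _ _ _ e2.
have feas1 mu : Lagr c T eps r kappa X1 q1 mu = Lagr c T eps r kappa X1 q1 mu1.
  rewrite (Lagr_mu _ _ mu1) big1 ?addr0 // => j _.
  by case: e1 => _ [_ ->]; rewrite subrr mulr0.
have feas2 mu : Lagr c T eps r kappa X2 q2 mu = Lagr c T eps r kappa X2 q2 mu2.
  rewrite (Lagr_mu _ _ mu2) big1 ?addr0 // => j _.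
  by case: e2 => _ [_ ->]; rewrite subrr mulr0.
have hmin X' : inS r X' -> Lagr c T eps r kappa X1 q1 mu2 <= Lagr c T eps r kappa X' q1 mu2.
  move=> hX'; rewrite feas1; apply: le_trans (min1 X2 q2 hX2) _.
  rewrite (feas2 mu1); exact: min2.
have eX i j : X1 i j = X2 i j.
  by rewrite (Xmin_gibbs _ _ _ hX1 hmin); case: e2 => _ [-> _].
have EX : X1 = X2 by apply: funext => i; apply: funext => j; exact: eX.
have hT' := hT.
have Eq : q1 = q2.
  apply: funext => j.
  have := proj2 (proj2 e1) j; have := proj2 (proj2 e2) j; rewrite EX => -> h.
  have : q1 j = T * (q1 j / T) by field; rewrite gt_eqF.
  by rewrite -h; move=> ->; field; rewrite gt_eqF.
split => //.
by apply: funext => j; rewrite (proj1 e1) (proj1 e2) Eq.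
Qed.

Lemma main_sec :
  (forall (X : 'I_m -> 'I_n -> R) (q mu : 'I_n -> R),
      saddle_point c T eps r kappa X q mu <-> equilibrium c T eps r kappa X q mu)
  /\ (exists! Xqmu : ('I_m -> 'I_n -> R) * ('I_n -> R) * ('I_n -> R),
        equilibrium c T eps r kappa Xqmu.1.1 Xqmu.1.2 Xqmu.2).
Proof.
split.
  by move=> X q mu; split; [exact: saddle_eq|exact: eq_saddle].
have [X [q [mu he]]] := exists_eq.
exists (X, q, mu); split => // -[[X' q'] mu'] /= he'.
by have [-> -> ->] := unique_eq _ _ _ _ _ _ he he'.
Qed.

End Model2.

End Helpers2.
Import Helpers2.

Local Open Scope ring_scope.


Theorem theorem1 (R : realType) (n m : nat) (c : 'I_n -> R) (T eps : R)
    (r : 'I_m -> R) (kappa : 'I_m -> 'I_n -> R) :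
  (0 < n)%N -> (0 < m)%N ->
  (forall j, 0 < c j) -> 0 < T -> 0 < eps ->
  (forall i, 0 < r i) -> (forall i j, 0 <= kappa i j) ->
  (forall (X : 'I_m -> 'I_n -> R) (q mu : 'I_n -> R),
      saddle_point c T eps r kappa X q mu <-> equilibrium c T eps r kappa X q mu)
  /\ (exists! Xqmu : ('I_m -> 'I_n -> R) * ('I_n -> R) * ('I_n -> R),
        equilibrium c T eps r kappa Xqmu.1.1 Xqmu.1.2 Xqmu.2).
Proof.
move=> hn hm hc hT heps hr hk.
apply: main_sec => //.
Qed.
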